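(* Let $M\ge 1$ be an integer (the number of end-to-end spatial subchannels, $M=KN$), let $\mathcal{P}_{\rm S}>0$ and $\mathcal{P}_{\rm R}>0$ be the total transmit powers available at the source and at the relay, and let $g_{1,1},\dots,g_{1,M}>0$ and $g_{2,1},\dots,g_{2,M}>0$ be the noise-normalized channel gains of the subchannels over hop 1 and hop 2, respectively (i.e. $g_{1,n}=\lambda_{1,n}/\sigma_{\rm R}^2$, $g_{2,n'}=\lambda_{2,n'}/\sigma_{\rm D}^2$). Let $c>0$ be a constant. Consider the problem $$\max_{\theta,\mu,\overline{\mu}}\ \sum_{n=1}^{M}\sum_{n'=1}^{M}\theta_{n,n'}\, c\,\min\Big(\log_2\big(1+\mathcal{P}_{\rm S}\mu_n g_{1,n}\big),\ \log_2\big(1+\mathcal{P}_{\rm R}\overline{\mu}_{n'} g_{2,n'}\big)\Big)$$ subject to $\sum_{n=1}^M\mu_n\le 1$, $\sum_{n'=1}^M\overline{\mu}_{n'}\le 1$, $\mu_n\ge 0$, $\overline{\mu}_{n'}\ge0$, $\theta_{n,n'}\in\{0,1\}$, $\sum_{n=1}^M\theta_{n,n'}=1$ for every $n'$ and $\sum_{n'=1}^M\theta_{n,n'}=1$ for every $n$. Then the optimal subchannel pairing is the sorted pairing: there is an optimal solution in which, for each $i=1,\dots,M$, the hop-1 subchannel with the $i$-th largest gain $g_{1,n}$ is paired (i.e. $\theta_{n,n'}=1$) with the hop-2 subchannel with the $i$-th largest gain $g_{2,n'}$.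
   Context: Setting: a half-duplex two-hop decode-and-forward MIMO-OFDM relaying system (source S, energy-harvesting relay R, destination D) where, after SVD precoding/filtering, each hop is decomposed into $M=KN$ parallel independent subchannels ($K$ OFDM subcarriers, $N=\min\{N_{\rm S},N_{\rm R},N_{\rm D}\}$ spatial subchannels per subcarrier), with $\lambda_{i,n}$ the squared nonzero singular values of the hop-$i$ channel matrices and $\sigma_{\rm R}^2,\sigma_{\rm D}^2$ the noise powers at R and D. The variable $\theta_{n,n'}=1$ means hop-1 subchannel $n$ is paired with hop-2 subchannel $n'$; $\mu_n$ and $\overline{\mu}_{n'}$ are power allocation fractions at S and R. The rate of a pair is the minimum of the two hop rates, and $c=\frac{(1-\alpha)\mathfrak{B}}{2K}$ for a fixed time-switching factor $\alpha\in[0,1)$ and bandwidth $\mathfrak{B}$. *)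

(* Defs.v *)
From HB Require Import structures.
From mathcomp Require Import all_boot all_order all_algebra all_fingroup.
From mathcomp Require Import all_classical all_reals all_analysis.
Set Implicit Arguments. Unset Strict Implicit. Unset Printing Implicit Defensive.
Import Order.TTheory GRing.Theory Num.Theory.
Local Open Scope ring_scope.

Definition log2 (R : realType) (x : R) : R := ln x / ln 2.

Definition objective (R : realType) (M : nat) (PS PR c : R)
  (g1 g2 : 'I_M -> R) (theta : 'I_M -> 'I_M -> R) (mu mub : 'I_M -> R) : R :=
  \sum_(n < M) \sum_(n' < M)
     theta n n' * (c * Num.min (log2 (1 + PS * mu n * g1 n))
                               (log2 (1 + PR * mub n' * g2 n'))).

Definition feasible (R : realType) (M : nat)
  (theta : 'I_M -> 'I_M -> R) (mu mub : 'I_M -> R) : Prop :=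
  (\sum_(n < M) mu n <= 1) /\
  (\sum_(n' < M) mub n' <= 1) /\
  (forall n, 0 <= mu n) /\
  (forall n', 0 <= mub n') /\
  (forall n n', theta n n' = 0 \/ theta n n' = 1) /\
  (forall n', \sum_(n < M) theta n n' = 1) /\
  (forall n, \sum_(n' < M) theta n n' = 1).

(* s lists the indices in nonincreasing order of gain: s i is the index with
   the (i+1)-th largest gain (0-based i). *)
Definition sorts_desc (R : realType) (M : nat) (g : 'I_M -> R) (s : {perm 'I_M}) : Prop :=
  forall i j : 'I_M, (i <= j)%N -> g (s j) <= g (s i).

(* Main.v *)
Require Import Defs.
From HB Require Import structures.
From mathcomp Require Import all_boot all_order all_algebra all_fingroup.
From mathcomp Require Import all_classical all_reals all_analysis.
From mathcomp Require Import ring lra zify.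
Import Order.TTheory GRing.Theory Num.Theory numFieldNormedType.Exports.
Local Open Scope ring_scope.
Local Open Scope classical_set_scope.

Lemma cont_sum (R : realType) (T : topologicalType) (I : Type) (r : seq I)
  (F : I -> T -> R) : (forall i, continuous (F i)) ->
  continuous (fun x => \sum_(i <- r) F i x).
Proof.
move=> hF; elim: r => [|i r IH].
  under eq_fun do rewrite big_nil; exact: cst_continuous.
under eq_fun do rewrite big_cons.
by move=> x; exact: (continuousD (hF i x) (IH x)).
Qed.

Lemma cont_log (R : realType) n (c : R) (k : 'I_n) :
  continuous (fun v : 'rV[R]_n => c * (ln (1 + `|v ord0 k|) / ln 2)).
Proof.
have h1 : continuous (fun v : 'rV[R]_n => v ord0 k) := @coord_continuous _ _ _ ord0 k.
have h2 : continuous (fun v : 'rV[R]_n => `|v ord0 k|).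
  by move=> v; exact: (continuous_comp (h1 v) (@norm_continuous _ R^o _)).
have h3 : continuous (fun v : 'rV[R]_n => 1 + `|v ord0 k|).
  by move=> v; exact: (continuousD (@cst_continuous _ R 1 v) (h2 v)).
have h4 : continuous (fun v : 'rV[R]_n => ln (1 + `|v ord0 k|)).
  move=> v; apply: (continuous_comp (h3 v)).
  by apply: continuous_ln; rewrite ltr_pwDl ?normr_ge0.
move=> v.
exact: (continuousM (@cst_continuous _ R c v) (continuousM (h4 v) (@cst_continuous _ R (ln 2)^-1 v))).
Qed.

Lemma cont_lin (R : realType) n (a : 'I_n -> R) :
  continuous (fun v : 'rV[R]_n => \sum_k v ord0 k * a k).
Proof.
have := @cont_sum R _ _ (index_enum 'I_n) (fun k (v : 'rV[R]_n) => v ord0 k * a k).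
apply => k v.
exact: (continuousM (@coord_continuous _ _ _ ord0 k v) (@cst_continuous _ R (a k) v)).
Qed.

Lemma evt_X (R : realType) n (A B : 'I_n -> R) (c : R) :
  (forall k, 0 < A k) -> (forall k, 0 < B k) ->
  exists x : 'rV[R]_n, [/\ (forall k, 0 <= x ord0 k),
    \sum_k x ord0 k * A k <= 1, \sum_k x ord0 k * B k <= 1 &
   forall y : 'rV[R]_n, (forall k, 0 <= y ord0 k) ->
     \sum_k y ord0 k * A k <= 1 -> \sum_k y ord0 k * B k <= 1 ->
     \sum_k c * (ln (1 + y ord0 k) / ln 2) <= \sum_k c * (ln (1 + x ord0 k) / ln 2)].
Proof.
move=> A0 B0.
pose X := [set v : 'rV[R]_n | (forall k, 0 <= v ord0 k) /\
   \sum_k v ord0 k * A k <= 1 /\ \sum_k v ord0 k * B k <= 1].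
pose f := fun v : 'rV[R]_n => \sum_k c * (ln (1 + `|v ord0 k|) / ln 2).
have X0 : X !=set0.
  exists 0; rewrite /X /=; split=> [k|]; first by rewrite mxE.
  by split; rewrite big1 ?ler01 // => k _; rewrite mxE mul0r.
have cX : compact X.
  apply: (@subclosed_compact _ _
    [set v : 'rV[R]_n | forall i, `[0, (A i)^-1]%classic (v ord0 i)]).
  - have -> : X = (\bigcap_(k in setT) [set v : 'rV[R]_n | 0 <= v ord0 k]) `&`
       ([set v | \sum_k v ord0 k * A k <= 1] `&` [set v | \sum_k v ord0 k * B k <= 1]).
      apply/seteqP; split => v /=.
        by move=> [h1 [h2 h3]]; split=> // k _; apply: h1.
      by move=> [h1 [h2 h3]]; split=> // k; apply: h1.
    apply: closedI; first apply: closed_bigI => k _.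
      apply: (@preimage_closed _ _ (fun v : 'rV[R]_n => v ord0 k) [set x | 0 <= x]).
        by move=> v _; exact: coord_continuous.
      exact: closed_ge.
    apply: closedI.
      apply: (@preimage_closed _ _ (fun v : 'rV[R]_n => \sum_k v ord0 k * A k) [set x | x <= 1]).
        by move=> v _; exact: cont_lin.
      exact: closed_le.
    apply: (@preimage_closed _ _ (fun v : 'rV[R]_n => \sum_k v ord0 k * B k) [set x | x <= 1]).
      by move=> v _; exact: cont_lin.
    exact: closed_le.
  - apply: (@rV_compact _ _ (fun i => `[0, (A i)^-1]%classic)) => i; exact: segment_compact.
  - move=> v [h1 [h2 _]] i /=; rewrite in_itv /= h1 /=.
    rewrite -(ler_pM2r (A0 i)) mulVf ?gt_eqF //.
    apply: le_trans h2.
    rewrite (bigD1 i) //= lerDl sumr_ge0 // => j _.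
    by rewrite mulr_ge0 // ltW.
have cf : {within X, continuous f}.
  apply: continuous_subspaceT.
  have := @cont_sum R _ _ (index_enum 'I_n)
     (fun k (v : 'rV[R]_n) => c * (ln (1 + `|v ord0 k|) / ln 2)).
  by apply => k; exact: cont_log.
have [x /set_mem [xA [xB xC]] xmax] := EVT_max_rV X0 cX cf.
exists x; split => // y yA yB yC.
have := xmax y (mem_set (conj yA (conj yB yC))).
rewrite /f.
rewrite (eq_bigr (fun k => c * (ln (1 + y ord0 k) / ln 2))); last first.
  by move=> k _; rewrite ger0_norm.
rewrite [X in _ <= X](eq_bigr (fun k => c * (ln (1 + x ord0 k) / ln 2))); last by move=> k _; rewrite ger0_norm.
by [].
Qed.
Lemma two_pt (R : numDomainType) n (f g : 'I_n -> R) (k l : 'I_n) :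
  k != l -> (forall j, j != k -> j != l -> f j = g j) ->
  \sum_j f j = \sum_j g j + (f k + f l - (g k + g l)).
Proof.
move=> kl fg.
rewrite (bigD1 k) //= (bigD1 l) /=; last by rewrite eq_sym.
rewrite [\sum_j g j](bigD1 k) //= [\sum_(j | j != k) g j](bigD1 l) /=; last by rewrite eq_sym.
rewrite [\sum_(j | (j != k) && (j != l)) f j](eq_bigr g); last first.
  by move=> j /andP [jk jl]; apply: fg.
ring.
Qed.

Lemma pair_le (R : numDomainType) n (f : 'I_n -> R) (k l : 'I_n) :
  k != l -> (forall j, 0 <= f j) -> f k + f l <= \sum_j f j.
Proof.
move=> kl f0.
rewrite (bigD1 k) //= (bigD1 l) /=; last by rewrite eq_sym.
by rewrite addrA lerDl sumr_ge0.
Qed.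
Arguments pair_le {R n f k l}.

Lemma strict_mono_id n (t : {perm 'I_n}) :
  (forall k l : 'I_n, (k < l)%N -> (t k < t l)%N) -> t = 1%g.
Proof.
move=> ht.
have ge : forall m (k : 'I_n), nat_of_ord k = m -> (k <= t k)%N.
  elim=> [k -> //|m IH k km].
  have mn : (m < n)%N by move: (ltn_ord k); rewrite km; lia.
  have h1 := IH (Ordinal mn) erefl; rewrite /= in h1.
  have h2 := ht (Ordinal mn) k; rewrite km /= in h2.
  have := h2 (ltnSn m); rewrite km; lia.
have sum : (\sum_(k < n) (t k : nat) = \sum_(k < n) (k : nat))%N.
  by rewrite [RHS](reindex_inj (@perm_inj _ t)).
have sum2 : (\sum_(k < n) (t k : nat) = \sum_(k < n) (t k - k) + \sum_(k < n) (k : nat))%N.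
  by rewrite -big_split /=; apply: eq_bigr => k _; rewrite subnK // (ge k).
have : (\sum_(k < n) (t k - k) == 0)%N by apply/eqP; move: sum2; rewrite sum; lia.
rewrite sum_nat_eq0 => /forallP h.
apply/permP => k; rewrite perm1; apply/val_inj/eqP.
have := h k; have := ge k _ erefl; rewrite /= subn_eq0 eqn_leq => -> ->; done.
Qed.

Lemma minlog (R : realType) (u v : R) : 0 <= u -> 0 <= v ->
  Num.min (ln (1 + u) / ln 2) (ln (1 + v) / ln 2) = ln (1 + Num.min u v) / ln 2.
Proof.
move=> u0 v0; have l2 : 0 < ln (2:R) by apply: ln_gt0; lra.
have mono : forall a b : R, 0 <= a -> 0 <= b ->
    (ln (1 + a) / ln 2 <= ln (1 + b) / ln 2) = (a <= b).
  move=> a b a0 b0; rewrite ler_pM2r ?invr_gt0 // ler_ln ?lerD2l // posrE; lra.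
case: (leP u v) => h.
  by rewrite !min_l // mono.
by rewrite !min_r // ?mono // ltW.
Qed.

Lemma reduce (R : realType) (M : nat) (PS PR c : R) (g1 g2 : 'I_M -> R)
  (hPS : 0 < PS) (hPR : 0 < PR) (hg1 : forall n, 0 < g1 n) (hg2 : forall n, 0 < g2 n)
  (s1 s2 : {perm 'I_M}) (hs1 : sorts_desc g1 s1) (hs2 : sorts_desc g2 s2)
  (th : 'I_M -> 'I_M -> R) (mu' mub' : 'I_M -> R) :
  feasible th mu' mub' ->
  exists y : 'rV[R]_M, [/\ forall k, 0 <= y ord0 k,
    \sum_k y ord0 k * (PS * g1 (s1 k))^-1 <= 1,
    \sum_k y ord0 k * (PR * g2 (s2 k))^-1 <= 1 &
    objective PS PR c g1 g2 th mu' mub' = \sum_k c * (ln (1 + y ord0 k) / ln 2)].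
Proof.
move=> [h1 [h2 [h3 [h4 [h5 [h6 h7]]]]]].
have th0 : forall n n', 0 <= th n n' by move=> n n'; case: (h5 n n') => ->; lra.
have ex : forall n, exists n', th n n' = 1.
  move=> n; have [//|hn] := pselect (exists n', th n n' = 1).
  have : \sum_n' th n n' = 0.
    apply: big1 => n' _; case: (h5 n n') => // e; exfalso; apply: hn; by exists n'.
  by rewrite h7 => /eqP; rewrite oner_eq0.
case: (choice ex) => pi hpi.
have uniq_row : forall n n', th n n' = 1 -> n' = pi n.
  move=> n n' e; apply/eqP; apply: contraT => ne.
  by have := pair_le ne (th0 n); rewrite e hpi h7; lra.
have th_other : forall n n', n' != pi n -> th n n' = 0.
  move=> n n' ne; case: (h5 n n') => // e.
  by rewrite (uniq_row _ _ e) eqxx in ne.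
have pi_inj : injective pi.
  move=> a b e; apply/eqP; apply: contraT => ne.
  by have := pair_le ne (fun j => th0 j (pi a)); rewrite hpi e hpi h6; lra.
pose P := perm pi_inj.
pose x n := Num.min (PS * mu' n * g1 n) (PR * mub' (pi n) * g2 (pi n)).
have x0 : forall n, 0 <= x n.
  by move=> n; rewrite /x le_min !mulr_ge0 // ltW.
have obj : objective PS PR c g1 g2 th mu' mub' = \sum_n c * (ln (1 + x n) / ln 2).
  rewrite /objective; apply: eq_bigr => n _.
  rewrite (bigD1 (pi n)) //= hpi mul1r big1 ?addr0; last first.
    by move=> j /th_other ->; rewrite mul0r.
  by rewrite /log2 minlog // mulr_ge0 // ?mulr_ge0 // ltW.
pose A k := (PS * g1 (s1 k))^-1.
pose B k := (PR * g2 (s2 k))^-1.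
have Amono : forall k l : 'I_M, (k <= l)%N -> A k <= A l.
  move=> k l kl; rewrite /A lef_pV2 ?posrE ?mulr_gt0 // ler_pM2l //; exact: hs1.
have Bmono : forall k l : 'I_M, (k <= l)%N -> B k <= B l.
  move=> k l kl; rewrite /B lef_pV2 ?posrE ?mulr_gt0 // ler_pM2l //; exact: hs2.
pose Pr := fun p : {perm 'I_M} * {perm 'I_M} =>
  (\sum_k x (p.1 k) * A k <= 1) && (\sum_k x (p.1 k) * B (p.2 k) <= 1).
pose Phi := fun p : {perm 'I_M} * {perm 'I_M} => (\sum_(k < M) k * p.2 k)%N.
have P0 : Pr (s1, (s1 * P * s2^-1)%g).
  apply/andP; split.
  - rewrite /A /=.
    have -> : \sum_k x (s1 k) * (PS * g1 (s1 k))^-1 = \sum_n x n * (PS * g1 n)^-1.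
      by rewrite [RHS](reindex_inj (@perm_inj _ s1)).
    apply: le_trans h1; apply: ler_sum => n _.
    rewrite -/(x n / (PS * g1 n)) ler_pdivrMr ?mulr_gt0 //.
    have -> : mu' n * (PS * g1 n) = PS * mu' n * g1 n by ring.
    by rewrite /x ge_min lexx.
  - rewrite /B /=.
    have -> : \sum_k x (s1 k) * (PR * g2 (s2 ((s1 * P * s2^-1)%g k)))^-1
            = \sum_n x n * (PR * g2 (pi n))^-1.
      rewrite [RHS](reindex_inj (@perm_inj _ s1)); apply: eq_bigr => k _.
      by rewrite !permM permKV permE.
    apply: le_trans h2.
    rewrite [X in _ <= X](reindex_inj pi_inj); apply: ler_sum => n _.
    rewrite -/(x n / (PR * g2 (pi n))) ler_pdivrMr ?mulr_gt0 //.
    have -> : mub' (pi n) * (PR * g2 (pi n)) = PR * mub' (pi n) * g2 (pi n) by ring.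
    by rewrite /x ge_min lexx orbT.
case: (arg_maxnP Phi P0) => -[σ τ] Pp pmax.
have phi_lt : forall (k l : 'I_M) σ', (k < l)%N -> (τ l < τ k)%N ->
    (Phi (σ, τ) < Phi (σ', (tperm k l * τ)%g))%N.
  move=> k l σ' kl lt; rewrite /Phi /= -(ltr_nat R) !natr_sum.
  have ne : k != l by apply/eqP => e; rewrite e ltnn in kl.
  rewrite [X in _ < X](@two_pt _ _ _ (fun j : 'I_M => (j * τ j)%:R) k l ne); last first.
    by move=> j jk jl; rewrite permM tpermD // eq_sym.
  rewrite ltrDl !permM tpermL tpermR !natrM.
  have : (k%:R : R) < l%:R by rewrite ltr_nat.
  have : ((τ l)%:R : R) < (τ k)%:R by rewrite ltr_nat.
  nra.
have tau1 : τ = 1%g.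
  apply: strict_mono_id => k l kl.
  have ne : k != l by apply/eqP => e; rewrite e ltnn in kl.
  rewrite ltn_neqAle; apply/andP; split.
    apply/negP => /eqP e; move/eqP: ne; apply; exact: (@perm_inj _ τ _ _ (val_inj e)).
  rewrite leqNgt; apply/negP => lt.
  case: (lerP (x (σ l)) (x (σ k))) => hx.
  - have Pq : Pr (σ, (tperm k l * τ)%g).
      move/andP: Pp => [Pa Pb]; apply/andP; split => //=.
      rewrite (@two_pt _ _ _ (fun j => x (σ j) * B (τ j)) k l ne); last first.
        by move=> j jk jl; rewrite permM tpermD // eq_sym.
      rewrite !permM tpermL tpermR.
      have := Bmono _ _ (ltnW lt); move: Pb; nra.
    move: (pmax _ Pq) (phi_lt k l σ kl lt); rewrite /Phi /=; lia.
  - have Pq : Pr ((tperm k l * σ)%g, (tperm k l * τ)%g).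
      move/andP: Pp => [Pa Pb]; apply/andP; split => //=.
        rewrite (@two_pt _ _ _ (fun j => x (σ j) * A j) k l ne); last first.
          by move=> j jk jl; rewrite permM tpermD // eq_sym.
        rewrite !permM tpermL tpermR.
        have := Amono _ _ (ltnW kl); move: Pa; nra.
      rewrite (@two_pt _ _ _ (fun j => x (σ j) * B (τ j)) k l ne); last first.
        by move=> j jk jl; rewrite !permM tpermD // eq_sym.
      rewrite !permM tpermL tpermR; move: Pb; lra.
    move: (pmax _ Pq) (phi_lt k l (tperm k l * σ)%g kl lt); rewrite /Phi /=; lia.
move: Pp; rewrite tau1 /= => /andP [Pa Pb].
exists (\row_k x (σ k)); split.
- by move=> k; rewrite mxE.
- by under eq_bigr do rewrite mxE.
- have Pb' : \sum_k x (σ k) * B k <= 1.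
    by move: Pb; under eq_bigr do rewrite perm1.
  by under eq_bigr do rewrite mxE.
- rewrite obj [LHS](reindex_inj (@perm_inj _ σ)).
  by apply: eq_bigr => k _; rewrite mxE.
Qed.

Theorem theorem1 (R : realType) (M : nat) (hM : (1 <= M)%N)
  (PS PR c : R) (g1 g2 : 'I_M -> R)
  (hPS : 0 < PS) (hPR : 0 < PR) (hc : 0 < c)
  (hg1 : forall n, 0 < g1 n) (hg2 : forall n, 0 < g2 n)
  (s1 s2 : {perm 'I_M}) (hs1 : sorts_desc g1 s1) (hs2 : sorts_desc g2 s2) :
  exists (theta : 'I_M -> 'I_M -> R) (mu mub : 'I_M -> R),
    [/\ feasible theta mu mub,
        (forall i : 'I_M, theta (s1 i) (s2 i) = 1)
      & (forall (theta' : 'I_M -> 'I_M -> R) (mu' mub' : 'I_M -> R),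
           feasible theta' mu' mub' ->
           objective PS PR c g1 g2 theta' mu' mub'
             <= objective PS PR c g1 g2 theta mu mub)].
Proof.
pose A := fun k => (PS * g1 (s1 k))^-1.
pose B := fun k => (PR * g2 (s2 k))^-1.
have A0 : forall k, 0 < A k by move=> k; rewrite invr_gt0 mulr_gt0.
have B0 : forall k, 0 < B k by move=> k; rewrite invr_gt0 mulr_gt0.
have [xs [xs0 xsA xsB xsmax]] := @evt_X R M A B c A0 B0.
pose theta := fun n n' : 'I_M => if n' == s2 (s1^-1 n)%g then 1 else 0 : R.
pose mu := fun n => xs ord0 (s1^-1 n)%g * (PS * g1 n)^-1.
pose mub := fun n' => xs ord0 (s2^-1 n')%g * (PR * g2 n')^-1.
have key : forall n n', (n' == s2 (s1^-1 n)%g) = (n == s1 (s2^-1 n')%g).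
  by move=> n n'; apply/eqP/eqP => ->; rewrite ?permK ?permKV.
exists theta, mu, mub; split.
- split; [|split; [|split; [|split; [|split; [|split]]]]].
  + rewrite (reindex_inj (@perm_inj _ s1)).
    by under eq_bigr do rewrite /mu permK.
  + rewrite (reindex_inj (@perm_inj _ s2)).
    by under eq_bigr do rewrite /mub permK.
  + by move=> n; rewrite /mu mulr_ge0 // invr_ge0 ltW // mulr_gt0.
  + by move=> n; rewrite /mub mulr_ge0 // invr_ge0 ltW // mulr_gt0.
  + by move=> n n'; rewrite /theta; case: ifP; [right|left].
  + move=> n'; under eq_bigr do rewrite /theta key.
    by rewrite -big_mkcond big_pred1_eq.
  + by move=> n; rewrite -big_mkcond big_pred1_eq.
- by move=> i; rewrite /theta permK eqxx.
move=> th mu' mub' hf.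
have [y [y0 yA yB ->]] :=
  @reduce R M PS PR c g1 g2 hPS hPR hg1 hg2 s1 s2 hs1 hs2 th mu' mub' hf.
apply: le_trans (xsmax y y0 yA yB) _.
rewrite le_eqVlt; apply/orP; left; rewrite eq_sym; apply/eqP.
rewrite /objective [X in X = _](reindex_inj (@perm_inj _ s1)).
apply: eq_bigr => k _.
rewrite (bigD1 (s2 k)) //= /theta permK eqxx mul1r big1 ?addr0; last first.
  by move=> j /negbTE ->; rewrite mul0r.
have e1 : PS * mu (s1 k) * g1 (s1 k) = xs ord0 k.
  rewrite /mu permK; field; rewrite ?gt_eqF //.
have e2 : PR * mub (s2 k) * g2 (s2 k) = xs ord0 k.
  rewrite /mub permK; field; rewrite ?gt_eqF //.
by rewrite e1 e2 minxx.
Qed.
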